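(* Let $D$ be a finite digraph, let $k\ge 2$, and let $D_1,\dots,D_t$ be the strong components of $D$. Then $D$ is $k$-AW if and only if each $D_i$ is $k$-AW.
   Context: A digraph is strongly connected if for any two vertices $v,w$ there is a directed walk from $v$ to $w$ and one from $w$ to $v$. A strong component of $D$ is a maximal strongly connected subdigraph (an induced subdigraph); the vertex sets of the strong components partition $V(D)$. The $k$-lights out game on a digraph $D$ ($k\ge 2$): start with a labeling $\lambda:V(D)\to\mathbb{Z}_k$. Toggling a vertex $v$ increases by $1$ (mod $k$) the label of $v$ and of every vertex $w$ with $vw\in A(D)$. The game is won when every vertex has label $0$. A labeling is $k$-winnable if some finite sequence of toggles wins the game starting from it; $D$ is $k$-Always Winnable ($k$-AW) if every labeling $V(D)\to\mathbb{Z}_k$ is $k$-winnable. *)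

(* Defs.v *)
From mathcomp Require Import all_boot all_order all_algebra.
Set Implicit Arguments. Unset Strict Implicit. Unset Printing Implicit Defensive.
Import GRing.Theory.
Local Open Scope ring_scope.

(* A finite digraph is a finite vertex type V with an arc relation arc : rel V
   (arc v w means vw is an arc). *)

Definition toggle (k : nat) (V : finType) (arc : rel V)
    (lam : V -> 'Z_k) (v : V) : V -> 'Z_k :=
  fun w => if (w == v) || arc v w then lam w + 1 else lam w.

Definition winnable (k : nat) (V : finType) (arc : rel V) (lam : V -> 'Z_k) : Prop :=
  exists s : seq V, forall w, foldl (toggle arc) lam s w = 0.

Definition always_winnable (k : nat) (V : finType) (arc : rel V) : Prop :=
  forall lam : V -> 'Z_k, winnable arc lam.

Definition strong_comp (V : finType) (arc : rel V) (x : V) : {set V} :=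
  [set y | connect arc x y && connect arc y x].

Definition induced_arc (V : finType) (arc : rel V) (S : {set V}) :
    rel {y : V | y \in S} :=
  fun a b => arc (val a) (val b).
Arguments induced_arc {V} arc S.

(* Main.v *)
Require Import Defs.
From mathcomp Require Import all_boot all_order all_algebra.
From mathcomp Require Import zify.
Set Implicit Arguments. Unset Strict Implicit. Unset Printing Implicit Defensive.
Import GRing.Theory.
Local Open Scope ring_scope.

Section Eff.
Variables (k : nat) (V : finType) (arc : rel V).

Definition Nb (v w : V) := (w == v) || arc v w.
Definition eff (T : {set V}) (c : V -> 'Z_k) (w : V) : 'Z_k :=
  \sum_(v in T | Nb v w) c v.
Definition AWon (T : {set V}) := forall t : V -> 'Z_k,
  exists c : V -> 'Z_k, forall w, w \in T -> eff T c w = t w.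
Definition INJon (T : {set V}) := forall c : V -> 'Z_k,
  (forall w, w \in T -> eff T c w = 0) -> forall v, v \in T -> c v = 0.
Definition oc (T S : {set V}) := S \subset T /\
  forall v w, v \in S -> w \in T -> arc v w -> w \in S.

Lemma eff_loc (T : {set V}) (c c' : V -> 'Z_k) w : (forall v, v \in T -> c v = c' v) ->
  eff T c w = eff T c' w.
Proof. by move=> H; apply: eq_bigr => v /andP [/H]. Qed.

Lemma eff_split (T S : {set V}) (c : V -> 'Z_k) w : S \subset T ->
  eff T c w = eff S c w + eff (T :\: S) c w.
Proof.
move=> sST; rewrite /eff !big_mkcondr /= (big_setID S) /=.
by rewrite (setIidPr sST).
Qed.

Lemma eff_out (T S : {set V}) (c : V -> 'Z_k) w : oc T S -> w \in T -> w \notin S -> eff S c w = 0.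
Proof.
move=> [sST cl] wT wS; apply: big1 => v /andP [vS].
rewrite /Nb; case/orP => [/eqP wv|a]; first by rewrite wv vS in wS.
by rewrite (cl v w vS wT a) in wS.
Qed.

Lemma eff0 (T : {set V}) (c : V -> 'Z_k) w : (forall v, v \in T -> c v = 0) -> eff T c w = 0.
Proof. by move=> H; apply: big1 => v /andP [/H]. Qed.

Lemma effB (T : {set V}) (c1 c2 : V -> 'Z_k) w : eff T (fun v => c1 v - c2 v) w = eff T c1 w - eff T c2 w.
Proof. by rewrite /eff sumrB. Qed.

Definition FF (T : {set V}) (c : {ffun V -> 'Z_k}) : {ffun V -> 'Z_k} :=
  [ffun w => if w \in T then eff T c w else c w].

Lemma AW_INJ (T : {set V}) : AWon T -> INJon T.
Proof.
move=> AW.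
have surj : forall y, exists x, FF T x == y.
  move=> y; have [c Hc] := AW y.
  exists (finfun (fun v => if v \in T then c v else y v)).
  apply/eqP/ffunP => w; rewrite ffunE.
  case: ifP => wT; last by rewrite ffunE wT.
  rewrite -(Hc w wT); apply: eff_loc => v vT; by rewrite ffunE vT.
pose g y := xchoose (surj y).
have gK : cancel g (FF T) by move=> y; apply/eqP; exact: (xchooseP (surj y)).
have [h gh hg] := injF_bij (can_inj gK).
have Fh : forall x, FF T x = h x by move=> x; rewrite -{1}(hg x) gK.
have injF : injective (FF T).
  by move=> x1 x2; rewrite !Fh; apply: (can_inj hg).
move=> c Hc v vT.
pose c' := finfun (fun v => if v \in T then c v else 0).
have E : FF T c' = FF T (finfun (fun _ => 0)).
  apply/ffunP => w; rewrite !ffunE; case: ifP => wT.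
    rewrite [RHS]eff0; last by move=> u _; rewrite ffunE.
    rewrite -(Hc w wT); apply: eff_loc => u uT; by rewrite ffunE uT.
  by rewrite ?ffunE wT.
have := congr1 (fun f : {ffun V -> 'Z_k} => f v) (injF _ _ E); by rewrite !ffunE vT.
Qed.

Lemma INJ_AW (T : {set V}) : INJon T -> AWon T.
Proof.
move=> IJ.
have injF : injective (FF T).
  move=> c1 c2 E; apply/ffunP => v.
  have H1 : forall w, (FF T c1) w = (FF T c2) w by move=> w; rewrite E.
  case vT: (v \in T); last by have := H1 v; rewrite !ffunE vT.
  apply/eqP; rewrite -subr_eq0; apply/eqP.
  apply: (IJ (fun v => c1 v - c2 v)) => // w wT.
  by rewrite effB; have := H1 w; rewrite !ffunE wT => ->; rewrite subrr.
have [h Fh hF] := injF_bij injF.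
move=> t; exists (h (finfun t)) => w wT.
have := congr1 (fun f : {ffun V -> 'Z_k} => f w) (hF (finfun t)); by rewrite !ffunE wT.
Qed.

Lemma AW_diff (T S : {set V}) : AWon T -> oc T S -> AWon (T :\: S).
Proof.
move=> AW [sST cl] t; have [c Hc] := AW t; exists c => w.
rewrite inE => /andP [wS wT].
by rewrite -(Hc w wT) (eff_split c w sST) (eff_out c (conj sST cl) wT wS) add0r.
Qed.

Lemma AW_glue (T S : {set V}) : oc T S -> AWon S -> AWon (T :\: S) -> AWon T.
Proof.
move=> [sST cl] AS AD t.
have [c2 H2] := AD t.
have [c1 H1] := AS (fun w => t w - eff (T :\: S) c2 w).
exists (fun v => if v \in S then c1 v else c2 v) => w wT.
rewrite (eff_split _ w sST).
have -> : eff (T :\: S) (fun v => if v \in S then c1 v else c2 v) w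
   = eff (T :\: S) c2 w.
  by apply: eff_loc => v; rewrite inE => /andP [/negbTE ->].
case wS: (w \in S).
  rewrite (@eff_loc S _ c1); last by move=> v ->.
  by rewrite H1 // subrK.
rewrite (eff_out _ (conj sST cl) wT) ?wS // add0r H2 //.
by rewrite inE wS.
Qed.

Lemma AW_sub (T S : {set V}) : AWon T -> oc T S -> AWon S.
Proof.
move=> AW [sST cl]; apply: INJ_AW => c Hc v vS.
pose c' := fun v => if v \in S then c v else 0.
have Z : forall w, w \in T -> eff T c' w = 0.
  move=> w wT; rewrite (eff_split _ w sST).
  rewrite [eff (T :\: S) _ _]eff0 ?addr0; last first.
    by move=> u; rewrite inE /c' => /andP [/negbTE ->].
  case wS: (w \in S); last by rewrite (eff_out _ (conj sST cl) wT) ?wS.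
  rewrite -(Hc w wS); apply: eff_loc => u uS; by rewrite /c' uS.
have := AW_INJ AW Z (subsetP sST v vS); by rewrite /c' vS.
Qed.

End Eff.

Section Win.
Variables (k : nat) (V : finType) (arc : rel V).

Lemma fold_seq (s : seq V) (lam : V -> 'Z_k) :
  exists c : V -> 'Z_k, forall w,
    foldl (toggle arc) lam s w = lam w + \sum_(v | Nb arc v w) c v.
Proof.
elim: s lam => [|u s IH] lam /=.
  by exists (fun _ => 0) => w; rewrite big1 ?addr0.
have [c Hc] := IH (toggle arc lam u).
exists (fun v => c v + (v == u)%:R) => w; rewrite Hc big_split /=.
have -> : \sum_(v | Nb arc v w) ((v == u)%:R : 'Z_k) = (Nb arc u w)%:R.
  rewrite big_mkcond (bigD1 u) //= eqxx big1 ?addr0.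
    by case: (Nb arc u w).
  by move=> v /negbTE ->; case: ifP.
rewrite /toggle /Nb; case: ifP => _ /=; by rewrite ?addr0 // -addrA [1 + _]addrC.
Qed.

Lemma fold_nseq (n : nat) (v : V) (lam : V -> 'Z_k) w :
  foldl (toggle arc) lam (nseq n v) w = lam w + (Nb arc v w)%:R *+ n.
Proof.
elim: n lam => [|n IH] lam /=; first by rewrite addr0.
rewrite IH /toggle /Nb mulrS; case: ifP => _ /=; by rewrite ?add0r ?addrA.
Qed.

Lemma fold_c (c : V -> 'Z_k) (r : seq V) :
  exists s, forall lam w,
    foldl (toggle arc) lam s w = lam w + \sum_(v <- r | Nb arc v w) c v.
Proof.
elim: r => [|u r [s Hs]].
  by exists [::] => lam w; rewrite big_nil addr0.
exists (nseq (c u) u ++ s) => lam w.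
rewrite foldl_cat Hs fold_nseq big_cons -addrA; congr (_ + _).
rewrite -mulr_natl natr_Zp; by case: (Nb arc u w); rewrite /= ?mulr1 ?mulr0 ?add0r.
Qed.

Lemma effT (c : V -> 'Z_k) w : eff arc setT c w = \sum_(v | Nb arc v w) c v.
Proof. by apply: eq_bigl => v; rewrite in_setT. Qed.

Lemma win_iff : always_winnable k arc <-> AWon k arc setT.
Proof.
split.
  move=> AW t; have [s Hs] := AW (fun w => - t w).
  have [c Hc] := fold_seq s (fun w => - t w).
  exists c => w _; have := Hs w; rewrite Hc effT.
  by move/eqP; rewrite addrC subr_eq0 => /eqP.
move=> AW lam; have [c Hc] := AW (fun w => - lam w).
have [s Hs] := fold_c c (enum V).
exists s => w; rewrite Hs.
have := Hc w (in_setT w); rewrite effT => E.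
rewrite big_enum_cond /= (eq_bigl (fun v => Nb arc v w)) // E.
by rewrite subrr.
Qed.
End Win.

Section Ind.
Variables (k : nat) (V : finType) (arc : rel V) (C : {set V}).
Let U := {y : V | y \in C}.

Lemma sum_sub (P : pred V) (F : V -> 'Z_k) :
  \sum_(v in C | P v) F v = \sum_(u : U | P (val u)) F (val u).
Proof. by rewrite big_mkcondr /= big_sub /= -big_mkcond. Qed.

Lemma Nb_ind (u u' : U) : Nb (induced_arc arc C) u' u = Nb arc (val u') (val u).
Proof. by rewrite /Nb /induced_arc -val_eqE. Qed.

Lemma ind_iff : always_winnable k (induced_arc arc C) <-> AWon k arc C.
Proof.
split.
  move=> /(@win_iff k _ (induced_arc arc C)) AW t; have [c' Hc] := AW (fun u => t (val u)).
  exists (fun v => odflt 0 (omap c' (insub v))) => w wC.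
  have := Hc (Sub w wC) (in_setT _); rewrite effT /= => <-.
  rewrite /eff sum_sub; apply: eq_big => [u|u _]; first by rewrite Nb_ind.
  by rewrite valK.
move=> AW; apply/(@win_iff k _ (induced_arc arc C)) => t'; have [c Hc] := AW (fun v => odflt 0 (omap t' (insub v))).
exists (fun u => c (val u)) => u _; rewrite effT.
have := Hc (val u) (valP u); rewrite valK /= => <-.
rewrite /eff sum_sub; apply: eq_bigl => u'; by rewrite Nb_ind.
Qed.
End Ind.

Theorem mainTheorem3 (k : nat) (V : finType) (arc : rel V) :
  (1 < k)%N ->
  (always_winnable k arc <->
   forall x : V, always_winnable k (induced_arc arc (strong_comp arc x))).
Proof.
move=> _; split.
  move=> /(@win_iff k _ arc) AW x; apply/(@ind_iff k _ arc).
  pose R := [set y | connect arc x y].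
  pose R' := [set y in R | ~~ connect arc y x].
  have ocR : oc arc setT R.
    split; first exact: subsetT.
    move=> v w; rewrite !inE => xv _ a; exact: connect_trans xv (connect1 a).
  have ocR' : oc arc R R'.
    split; first by apply/subsetP => y; rewrite inE => /andP [].
    move=> v w; rewrite !inE => /andP [xv nvx] xw a; rewrite xw /=.
    apply: contra nvx; exact: connect_trans (connect1 a).
  have -> : strong_comp arc x = R :\: R'.
    apply/setP => y; rewrite /strong_comp !inE.
    by case: (connect arc x y); case: (connect arc y x).
  exact: AW_diff (AW_sub AW ocR) ocR'.
move=> H; apply/(@win_iff k _ arc).
have HC : forall x, AWon k arc (strong_comp arc x) by move=> x; apply/(@ind_iff k _ arc).
suff : forall n (T : {set V}), (#|T| <= n)%N ->
  (forall y z, y \in T -> z \in strong_comp arc y -> z \in T) -> AWon k arc T.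
  move/(_ #|V| setT); apply; first by rewrite cardsT.
  by move=> y z _ _; rewrite in_setT.
elim=> [|n IH] T.
  rewrite leqn0 cards_eq0 => /eqP -> _ t; exists t => w; by rewrite inE.
move=> cT clT.
case: (set_0Vmem T) => [-> |[x0 x0T]].
  by move=> t; exists t => w; rewrite inE.
pose RR y := [set z in T | connect arc y z].
case: (@arg_minnP _ x0 (mem T) (fun y => #|RR y|) x0T) => x xT xmin.
have {}xT : x \in T by [].
have cx : forall z, z \in RR x -> connect arc z x.
  move=> z; rewrite inE => /andP [zT xz].
  have sub : RR z \subset RR x.
    apply/subsetP => w; rewrite !inE => /andP [-> zw].
    exact: connect_trans xz zw.
  have /eqP E : RR z == RR x by rewrite eqEcard sub xmin.
  have : x \in RR z by rewrite E inE xT connect0.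
  by rewrite inE => /andP [].
have RC : RR x = strong_comp arc x.
  apply/setP => z; rewrite /strong_comp inE.
  apply/idP/idP.
    move=> zR; move: (zR); rewrite inE => /andP [_ ->]; exact: cx.
  move=> zC; rewrite inE (clT x z xT) //=; last by rewrite /strong_comp inE.
  by case/andP: zC.
have ocRx : oc arc T (RR x).
  split; first by apply/subsetP => z; rewrite inE => /andP [].
  move=> v w; rewrite !inE => /andP [_ xv] -> a /=.
  exact: connect_trans xv (connect1 a).
apply: (AW_glue ocRx); first by rewrite RC.
apply: (IH).
  rewrite cardsDS; last by case: ocRx.
  have : (0 < #|RR x|)%N by apply/card_gt0P; exists x; rewrite inE xT connect0.
  move: cT; clear; lia.
move=> y z yD zC; move: yD; rewrite inE => /andP [yR yT].
rewrite inE (clT y z yT zC) andbT.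
apply: contra yR; rewrite !inE => /andP [_ xz]; rewrite yT /=.
move: zC; rewrite /strong_comp inE => /andP [_ zy].
exact: connect_trans xz zy.
Qed.
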